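(* Let $P$ be a $q$-central probability measure on $(\Omega,\mathcal{C})$, let $N\ge1$ and $\gamma\in\mathfrak{S}_N$. For $\lambda\in\mathrm{Sign}_N$ let $\gamma_\lambda$ be the permutation of the set of finite paths from $*$ to $\lambda$ such that $\gamma((\omega_n)_{n=1}^\infty)=(\gamma_\lambda((\omega_n)_{n=1}^N),\omega_{N+1},\dots)$ whenever the edge $\omega_N$ ends at $\lambda$. Then \[\frac{dP\circ\gamma}{dP}=\sum_{\lambda\in\mathrm{Sign}_N}\sum_{\alpha}\frac{w(\gamma_\lambda(\alpha))}{w(\alpha)}1_{C_\alpha},\] where $\alpha$ runs over finite paths from $*$ to $\lambda$. In particular, $r(\Omega,\mathcal{C},P,\mathfrak{S})\subseteq\{q^{2n}\mid n\in\mathbb{Z}\}\cup\{0\}$.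
   Context: Fix $q\in(0,1)$. Gelfand--Tsetlin graph: for $N\ge1$ let $\mathrm{Sign}_N=\{\lambda\in\mathbb{Z}^N\mid \lambda_1\ge\cdots\ge\lambda_N\}$, $\mathrm{Sign}_0=\{*\}$, $|\lambda|=\lambda_1+\cdots+\lambda_N$. For $\mu\in\mathrm{Sign}_{N-1}$, $\lambda\in\mathrm{Sign}_N$ write $\mu\prec\lambda$ if $\lambda_1\ge\mu_1\ge\lambda_2\ge\cdots\ge\mu_{N-1}\ge\lambda_N$ (with $*\prec\lambda$ for all $\lambda\in\mathrm{Sign}_1$). Edges of level $N$ are pairs $[\mu,\lambda]$ with $\mu\prec\lambda$, source $\mu$, range $\lambda$; a path is a sequence of edges with the range of each equal to the source of the next. Weight: $w([\mu,\lambda])=q^{N|\mu|-(N-1)|\lambda|}$ for a level-$N$ edge; $w$ of a finite path is the product of its edge weights. $\dim_q(\lambda)=\sum_\alpha w(\alpha)$ over finite paths $\alpha$ from $*$ to $\lambda$. $\Omega$ is the set of infinite paths from $*$; $C_\alpha=\{\omega\in\Omega\mid\omega_n=e_n,\ n\le N\}$ for a finite path $\alpha=(e_n)_{n=1}^N$ from $*$; $\mathcal{C}$ is generated by cylinder sets. $P$ is $q$-central if $P(C_\alpha)/w(\alpha)=P(\{\omega\mid r(\omega_N)=\lambda\})/\dim_q(\lambda)$ for all $\lambda\in\mathrm{Sign}_N$ and finite paths $\alpha$ from $*$ to $\lambda$. For $\lambda\in\mathrm{Sign}_N$, each permutation $\gamma_0$ of the finite paths from $*$ to $\lambda$ acts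 on $\Omega$ by $\gamma(\omega)=(\gamma_0(\omega_1,\dots,\omega_N),\omega_{N+1},\dots)$ if $\omega_N$ ends at $\lambda$, $\gamma(\omega)=\omega$ otherwise; $\mathfrak{S}_N$ is generated by these for all $\lambda\in\mathrm{Sign}_N$, $\mathfrak{S}=\bigcup_N\mathfrak{S}_N$ ($q$-central measures are $\mathfrak{S}$-quasi-invariant). The full group $[\mathfrak{S}]$ consists of measurable $\gamma$ agreeing pointwise with some element of $\mathfrak{S}$ at each point. The ratio set $r(\Omega,\mathcal{C},P,\mathfrak{S})$ is the set of $r\in[0,\infty)$ such that for every $\epsilon>0$ and $A\in\mathcal{C}$ with $P(A)>0$ there exist $B\in\mathcal{C}$, $\gamma\in[\mathfrak{S}]$ with $P(B)>0$, $B\subseteq A$, $\gamma(B)\subseteq A$ and $|\frac{dP\circ\gamma}{dP}-r|<\epsilon$ a.e. on $B$. *)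

(* Defs.v *)
From HB Require Import structures.
From mathcomp Require Import all_boot all_order all_algebra.
From mathcomp Require Import all_classical all_reals all_analysis.
Set Implicit Arguments. Unset Strict Implicit. Unset Printing Implicit Defensive.
Import Order.TTheory GRing.Theory Num.Theory.
Local Open Scope classical_set_scope.
Local Open Scope ring_scope.

(* signatures: a signature of length N is a non-increasing seq of N ints;
   Sign_0 = {[::]} and [::] plays the role of the root * . *)
Definition is_sign (N : nat) (l : seq int) : bool :=
  (size l == N) && sorted (fun a b : int => b <= a) l.

Definition interlace (mu l : seq int) : bool :=
  (size l == (size mu).+1) &&
  all (fun i => (nth 0 mu i <= nth 0 l i) && (nth 0 l i.+1 <= nth 0 mu i))
      (iota 0 (size mu)).

Definition gt_edge (mu l : seq int) : bool :=
  [&& is_sign (size mu) mu, is_sign (size l) l & interlace mu l].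

Definition absl (l : seq int) : int := \sum_(x <- l) x.

Definition wedge (R : realType) (q : R) (mu l : seq int) : R :=
  let N := size l in
  q ^ ((N%:Z * absl mu - (N%:Z - 1) * absl l)%R).

(* A finite path from * of length N is encoded by its sequence of vertices
   [:: l_1; ...; l_N] (l_0 = * = [::] is implicit). *)
Definition edges_of (a : seq (seq int)) : seq (seq int * seq int) :=
  zip (belast [::] a) a.

Definition fin_path_to (N : nat) (l : seq int) (a : seq (seq int)) : bool :=
  [&& size a == N, path gt_edge [::] a & last [::] a == l].

Definition paths_to (N : nat) (l : seq int) : set (seq (seq int)) :=
  [set a | fin_path_to N l a].

Definition wpath (R : realType) (q : R) (a : seq (seq int)) : R :=
  \prod_(e <- edges_of a) wedge q e.1 e.2.

Definition dimq (R : realType) (q : R) (l : seq int) : R :=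
  \sum_(a \in paths_to (size l) l) wpath q a.

Definition is_inf_path (v : nat -> seq int) : Prop :=
  v 0%N = [::] /\ forall n, gt_edge (v n) (v n.+1).

Record Omega := MkOmega { vert : nat -> seq int; vertP : is_inf_path vert }.

Lemma zero_path : is_inf_path (fun n => nseq n (0 : int)).
Proof.
split => // n; rewrite /gt_edge /is_sign /interlace !size_nseq !eqxx /=.
apply/ssrbool.and3P; split.
- by case: n => // n /=; elim: n => //= n ->; rewrite lexx.
- by elim: n => //= n ->; rewrite lexx.
- apply/allP => i; rewrite mem_iota add0n => Hi.
  rewrite -[0 :: nseq n 0]/(nseq n.+1 0) !nth_nseq !if_same.
  by rewrite lexx.
Qed.

HB.instance Definition _ := gen_eqMixin Omega.
HB.instance Definition _ := gen_choiceMixin Omega.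
HB.instance Definition _ := isPointed.Build Omega (MkOmega zero_path).

Definition prefix (w : Omega) (N : nat) : seq (seq int) :=
  mkseq (fun i => vert w i.+1) N.

Definition cyl (a : seq (seq int)) : set Omega :=
  [set w | prefix w (size a) = a].

Definition cylinders : set (set Omega) :=
  [set C | exists N l a, is_sign N l /\ fin_path_to N l a /\ C = cyl a].

Definition OmegaC := g_sigma_algebraType cylinders.

Definition ends_at (N : nat) (l : seq int) : set OmegaC :=
  [set w : Omega | vert w N = l].

Definition q_central (R : realType) (q : R) (P : probability OmegaC R) : Prop :=
  forall N l a, is_sign N l -> fin_path_to N l a ->
    fine (P (cyl a : set OmegaC)) / wpath q a
    = fine (P (ends_at N l)) / dimq q l.

Definition acts_on_level (N : nat) (l : seq int)
  (s : seq (seq int) -> seq (seq int)) (g : Omega -> Omega) : Prop :=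
  forall w, vert w N = l ->
    prefix (g w) N = s (prefix w N) /\
    (forall i, (N < i)%N -> vert (g w) i = vert w i).

Definition generator (N : nat) (g : Omega -> Omega) : Prop :=
  exists l s, is_sign N l /\ set_bij (paths_to N l) (paths_to N l) s /\
              acts_on_level N l s g /\ (forall w, vert w N <> l -> g w = w).

Inductive SN (N : nat) : (Omega -> Omega) -> Prop :=
| SN_id : SN N id
| SN_gen g : generator N g -> SN N g
| SN_comp g h : SN N g -> SN N h -> SN N (g \o h)
| SN_inv g h : SN N g -> (forall w, g (h w) = w) -> (forall w, h (g w) = w) ->
               SN N h.

Definition in_S (g : Omega -> Omega) : Prop := exists N, SN N g.

Definition full_group (g : OmegaC -> OmegaC) : Prop :=
  measurable_fun setT g /\ forall w, exists h, in_S h /\ g w = h w.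

(* f is (a version of) the Radon--Nikodym derivative d(P o g)/dP *)
Definition is_RN_deriv (R : realType) (P : probability OmegaC R)
  (g : OmegaC -> OmegaC) (f : OmegaC -> R) : Prop :=
  measurable_fun setT f /\ (forall w, 0 <= f w) /\
  forall E : set OmegaC, measurable E ->
    P (g @` E) = (\int[P]_(x in E) (f x)%:E)%E.

Definition ratio_set (R : realType) (P : probability OmegaC R) : set R :=
  [set r | 0 <= r /\
    forall eps : R, 0 < eps ->
    forall A : set OmegaC, measurable A -> (0 < P A)%E ->
    exists (B : set OmegaC) (g : OmegaC -> OmegaC) (f : OmegaC -> R),
      measurable B /\ (0 < P B)%E /\ B `<=` A /\ full_group g /\
      g @` B `<=` A /\ is_RN_deriv P g f /\
      {ae P, forall x, B x -> `|f x - r| < eps}].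

(* Main.v *)
Require Import Defs.
From HB Require Import structures.
From mathcomp Require Import all_boot all_order all_algebra.
From mathcomp Require Import all_classical all_reals all_analysis.
From mathcomp Require Import measurable_realfun.
From mathcomp Require Import zify ring lra.
Import Order.TTheory GRing.Theory Num.Theory.
Local Open Scope classical_set_scope.
Local Open Scope ring_scope.
Set Implicit Arguments. Unset Strict Implicit. Unset Printing Implicit Defensive.
Local Notation prefix := Defs.prefix.

Definition valid (b : seq (seq int)) : bool := path gt_edge [::] b.

Lemma gt_edge_size x y : gt_edge x y -> size y = (size x).+1.
Proof. by case/and3P => _ _ /andP [/eqP]. Qed.

Lemma path_size_last x b : path gt_edge x b -> size (last x b) = (size x + size b)%N.
Proof.
elim: b x => [|y b IH] x /=; first by rewrite addn0.
by case/andP => /gt_edge_size e /IH ->; rewrite e addSnnS.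
Qed.

Lemma valid_sign b : valid b -> is_sign (size b) (last [::] b).
Proof.
case/lastP: b => [|b y] //; rewrite /valid => vb.
have := path_size_last vb; rewrite last_rcons /= add0n => <-.
by move: vb; rewrite rcons_path => /andP [_ /and3P [_ ]].
Qed.

Lemma valid_paths_to b : valid b -> paths_to (size b) (last [::] b) b.
Proof. by move=> vb; rewrite /paths_to /fin_path_to /=; apply/and3P. Qed.

Lemma paths_toP K l b : paths_to K l b -> [/\ valid b, size b = K & last [::] b = l].
Proof. by rewrite /paths_to /fin_path_to /= => /and3P [/eqP ? ? /eqP ?]. Qed.

Lemma size_prefix w n : size (prefix w n) = n.
Proof. by rewrite size_mkseq. Qed.

Lemma nth_prefix w n i d : (i < n)%N -> nth d (prefix w n) i = vert w i.+1.
Proof. by move=> h; rewrite nth_mkseq. Qed.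

Lemma vert0 w : vert w 0 = [::].
Proof. exact: (vertP w).1. Qed.

Lemma vertS w n : gt_edge (vert w n) (vert w n.+1).
Proof. exact: (vertP w).2. Qed.

Lemma last_prefix w n : last [::] (prefix w n) = vert w n.
Proof.
case: n => [|n]; first by rewrite vert0.
by rewrite -nth_last size_prefix nth_prefix.
Qed.

Lemma prefixS w n : prefix w n.+1 = rcons (prefix w n) (vert w n.+1).
Proof. by rewrite /Defs.prefix /mkseq -addn1 iotaD map_cat -cats1 add0n addn1. Qed.

Lemma prefix_valid w n : valid (prefix w n).
Proof.
elim: n => [|n IH] //; move: IH; rewrite prefixS /valid rcons_path => -> /=.
by rewrite last_prefix vertS.
Qed.

Lemma take_prefix m n w : (m <= n)%N -> take m (prefix w n) = prefix w m.
Proof. by move=> h; rewrite /Defs.prefix /mkseq -map_take take_iota (minn_idPl h). Qed.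

Lemma Omega_ext (w w' : Omega) : (forall i, vert w i = vert w' i) -> w = w'.
Proof.
case: w => v vP; case: w' => v' vP' /= H.
have E : v = v' by apply: funext.
subst v'; congr MkOmega; exact: Prop_irrelevance.
Qed.

Definition sfun (K : nat) (b : seq (seq int)) (w : Omega) (i : nat) : seq int :=
  if (i <= K)%N then nth [::] ([::] :: b) i else vert w i.

Lemma sfun_ok K b w :
  valid b && (size b == K) && (last [::] b == vert w K) -> is_inf_path (sfun K b w).
Proof.
case/andP => /andP [vb /eqP sb] /eqP lb; split => [|n]; first by rewrite /sfun.
rewrite /sfun; case: (ltngtP n K) => h.
- by move/pathP: vb => /(_ [::] n); rewrite sb => /(_ h).
- exact: vertS.
- rewrite h -sb -(last_nth [::]) lb sb; exact: vertS.
Qed.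

Definition splice K b w : Omega :=
  match pselect (is_inf_path (sfun K b w)) with
  | left H => MkOmega H
  | right _ => w
  end.

Lemma vert_splice K b w : valid b -> size b = K -> last [::] b = vert w K ->
  vert (splice K b w) = sfun K b w.
Proof.
move=> vb sb lb; rewrite /splice; case: pselect => // H; exfalso; apply: H.
by apply: sfun_ok; rewrite vb sb lb !eqxx.

Qed.

Definition presv K (F : seq (seq int) -> seq (seq int)) :=
  forall b, valid b -> size b = K ->
    [/\ valid (F b), size (F b) = K & last [::] (F b) = last [::] b].

Definition mapK K (F : seq (seq int) -> seq (seq int)) (w : Omega) : Omega :=
  splice K (F (prefix w K)) w.

Lemma vert_mapK K F w : presv K F -> vert (mapK K F w) = sfun K (F (prefix w K)) w.
Proof.
move=> hF; have [v s l] := hF _ (prefix_valid w K) (size_prefix w K).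
by apply: vert_splice => //; rewrite l last_prefix.
Qed.

Lemma prefix_mapK K F w M : presv K F ->
  prefix (mapK K F w) M = take M (F (prefix w K)) ++ drop K (prefix w M).
Proof.
move=> hF; have [v s l] := hF _ (prefix_valid w K) (size_prefix w K).
apply: (@eq_from_nth _ [::]).
- rewrite size_cat size_take size_drop !size_prefix s.
  case: (ltnP M K) => ?; lia.
- move=> i; rewrite size_prefix => hi.
  rewrite nth_prefix // vert_mapK // /sfun nth_cat size_take s.
  case: (leqP i.+1 K) => h.
  + have -> : (i < (if (M < K)%N then M else K))%N by case: (ltnP M K) => ? /=; lia.
    by rewrite nth_take /=.
  + have -> : (M < K)%N = false by lia.
    have -> : (i < K)%N = false by lia.
    rewrite nth_drop nth_prefix; [congr vert; lia | lia].
Qed.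

Lemma mapK_prefix K F w : presv K F -> prefix (mapK K F w) K = F (prefix w K).
Proof.
move=> hF; have [v s l] := hF _ (prefix_valid w K) (size_prefix w K).
by rewrite prefix_mapK // take_oversize ?s // drop_oversize ?size_prefix // cats0.
Qed.

Lemma presv_comp K F G : presv K F -> presv K G -> presv K (G \o F).
Proof.
move=> hF hG b vb sb; have [v s l] := hF _ vb sb.
by have [v' s' l'] := hG _ v s; split => //=; rewrite l'.
Qed.

Lemma mapK_comp K F G w : presv K F -> presv K G ->
  mapK K G (mapK K F w) = mapK K (G \o F) w.
Proof.
move=> hF hG; apply: Omega_ext => i.
rewrite (vert_mapK _ hG) (vert_mapK _ (presv_comp hF hG)) mapK_prefix // /sfun.
by case: leqP => // h; rewrite vert_mapK // /sfun leqNgt h.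
Qed.

Lemma mapK_id K F w : (forall b, valid b -> size b = K -> F b = b) -> mapK K F w = w.
Proof.
move=> hF; have pF : presv K F by move=> b vb sb; rewrite hF.
apply: Omega_ext => i; rewrite vert_mapK // hF ?prefix_valid ?size_prefix // /sfun.
case: leqP => // h; case: i h => [|i] h /=; first by rewrite vert0.
by rewrite nth_prefix.
Qed.

Lemma mapK_ext K F G w : F (prefix w K) = G (prefix w K) -> mapK K F w = mapK K G w.
Proof. by rewrite /mapK => ->. Qed.

Lemma cyl_meas b : measurable (cyl b : set OmegaC).
Proof.
have [vb|nvb] := boolP (valid b).
- apply: sub_sigma_algebra; exists (size b), (last [::] b), b; split.
    exact: valid_sign.
  by split => //; apply/and3P.
- suff -> : cyl b = set0 by exact: measurable0.
  apply/seteqP; split => // x /= h; move: nvb; by rewrite -h prefix_valid.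
Qed.

Definition Dn K (Q : seq (seq int) -> Prop) n : set Omega :=
  if unpickle n is Some b then
    (if `[< Q b >] && (size b == K) then cyl b else set0) else set0.

Lemma cylset_eq K Q : [set x : Omega | Q (prefix x K)] = \bigcup_n Dn K Q n.
Proof.
apply/seteqP; split => x /=.
- move=> h; exists (pickle (prefix x K)) => //; rewrite /Dn pickleK.
  by rewrite asboolT // size_prefix eqxx /cyl /= size_prefix.
- case=> n _; rewrite /Dn; case: unpickle => // b.
  case: ifP => // /andP [/asboolP hQ /eqP sb]; rewrite /cyl /= sb => ->.
  by [].
Qed.

Lemma cylset_meas K Q : measurable ([set x : OmegaC | Q (prefix x K)]).
Proof.
rewrite cylset_eq; apply: bigcupT_measurable => n; rewrite /Dn.
case: unpickle => // b; case: ifP => _; [exact: cyl_meas|exact: measurable0].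
Qed.

Lemma prefix_fun_meas d (T : measurableType d) K (h : seq (seq int) -> T) :
  measurable_fun setT (fun x : OmegaC => h (prefix x K)).
Proof. by move=> _ Y mY; rewrite setTI; exact: (cylset_meas K (fun p => Y (h p))). Qed.

Lemma mapK_meas K F : presv K F -> measurable_fun setT (mapK K F : OmegaC -> OmegaC).
Proof.
move=> hF; have h := (@measurability _ _ OmegaC OmegaC setT (mapK K F) cylinders erefl).
suff H2 : preimage_set_system [set: OmegaC] (mapK K F) cylinders `<=` measurable.
  exact: (h H2).
move=> _ [C [M [l [a [sl [fa ->]]]]] <-]; rewrite setTI.
pose M' := maxn (size a) K.
pose Q := fun p => take (size a) (F (take K p)) ++ drop K (take (size a) p) = a.
suff -> : mapK K F @^-1` cyl a = [set x | Q (prefix x M')].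
  exact: (cylset_meas M' Q).
apply/seteqP; split => x /=; rewrite /cyl /Q /= prefix_mapK // !take_prefix //.
all: try exact: leq_maxl.
all: try exact: leq_maxr.
Qed.

Section Weights.
Variables (R : realType) (q : R).
Hypothesis hq0 : 0 < q.

Definition wfrom (x : seq int) (t : seq (seq int)) : R :=
  \prod_(e <- zip (belast x t) t) wedge q e.1 e.2.

Lemma wpathE a : wpath q a = wfrom [::] a.
Proof. by []. Qed.

Lemma wfrom_cat x s t : wfrom x (s ++ t) = wfrom x s * wfrom (last x s) t.
Proof. by rewrite /wfrom belast_cat zip_cat ?size_belast // big_cat. Qed.

Lemma wfrom_gt0 x t : 0 < wfrom x t.
Proof. by apply: prodr_gt0 => e _; apply: exprz_gt0. Qed.

Lemma wpath_gt0 a : 0 < wpath q a.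
Proof. exact: wfrom_gt0. Qed.

Lemma wpath_neq0 a : wpath q a != 0.
Proof. by rewrite gt_eqF // wpath_gt0. Qed.

Definition wexp (b : seq (seq int)) : int :=
  2 * (\sum_(x <- b) absl x) - (size b + 1)%:Z * absl (last [::] b).

Lemma wpath_closed b : valid b -> wpath q b = q ^ (wexp b).
Proof.
elim/last_ind: b => [|b y IH]; first by rewrite /wpath /wexp /absl /edges_of /= !big_nil !mulr0 subr0 expr0z.
rewrite /valid rcons_path => /andP [vb e].
rewrite wpathE -cats1 wfrom_cat -wpathE IH //.
rewrite /wfrom /= big_cons big_nil mulr1 /wedge /=.
rewrite -expfzDr ?gt_eqF //; congr (q ^ _).
have sy : size y = (size b).+1.
  by rewrite (gt_edge_size e) (path_size_last vb) add0n.
rewrite /wexp cats1 big_rcons /= last_rcons size_rcons sy.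
rewrite -[(size b).+1]addn1 PoszD; ring.
Qed.

Lemma wpath_ratio b c : valid b -> valid c -> size b = size c ->
  last [::] b = last [::] c ->
  wpath q c / wpath q b = q ^ (2 * (\sum_(x <- c) absl x - \sum_(x <- b) absl x)).
Proof.
move=> vb vc sbc lbc; rewrite !wpath_closed //.
have -> : wexp c = 2 * (\sum_(x <- c) absl x - \sum_(x <- b) absl x) + wexp b.
  by rewrite /wexp sbc lbc; ring.
by rewrite expfzDr ?gt_eqF // mulfK // gt_eqF // exprz_gt0.
Qed.
End Weights.

Lemma valid_take n b : valid b -> valid (take n b).
Proof. by rewrite /valid -{1}(cat_take_drop n b) cat_path => /andP []. Qed.

Lemma valid_drop_path n b : valid b -> path gt_edge (last [::] (take n b)) (drop n b).
Proof. by rewrite /valid -{1}(cat_take_drop n b) cat_path => /andP []. Qed.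

Lemma Pcyl_ratio (R : realType) (q : R) (hq0 : 0 < q) (P : probability OmegaC R)
  (hP : q_central q P) b c : valid b -> valid c -> size b = size c ->
  last [::] b = last [::] c ->
  fine (P (cyl c)) = wpath q c / wpath q b * fine (P (cyl b)).
Proof.
move=> vb vc sbc lbc.
have hb := hP (size b) (last [::] b) b (valid_sign vb) (valid_paths_to vb).
have hc := hP (size c) (last [::] c) c (valid_sign vc) (valid_paths_to vc).
rewrite -sbc -lbc -hb in hc.
have nb := wpath_neq0 hq0 b; have nc := wpath_neq0 hq0 c.
rewrite -[LHS](divfK nc) hc; field.
by rewrite nb.
Qed.

Lemma cylI b c : (size b <= size c)%N ->
  cyl b `&` cyl c = if take (size b) c == b then cyl c else set0.
Proof.
move=> hbc; apply/seteqP; split => x.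
- rewrite /cyl /= => -[hb hc].
  have -> : take (size b) c == b by rewrite -hc take_prefix // hb.
  exact: hc.
- case: ifP => [/eqP tb|_ []] hc; split => //.
  by rewrite /cyl /= -(take_prefix x hbc) hc tb.
Qed.

Section GL.
Variables (R : realType) (q : R).
Hypothesis hq0 : 0 < q.
Variable P : probability OmegaC R.
Hypothesis hP : q_central q P.
Variables (K : nat) (F G : seq (seq int) -> seq (seq int)).
Hypotheses (hF : presv K F) (hG : presv K G).
Hypothesis hGF : forall b, valid b -> size b = K -> G (F b) = b.
Hypothesis hFG : forall b, valid b -> size b = K -> F (G b) = b.

Definition rhoK (x : Omega) : R := wpath q (F (prefix x K)) / wpath q (prefix x K).

Definition m1 (E : set OmegaC) : \bar R := P (mapK K G @^-1` E).

Let m1_0 : m1 set0 = 0%E.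
Proof. by rewrite /m1 preimage_set0 measure0. Qed.

Let m1_ge0 A : (0 <= m1 A)%E.
Proof. exact: measure_ge0. Qed.

Let m1_sa : semi_sigma_additive m1.
Proof.
have mf := mapK_meas hG.
move=> Fs mF tF mUF; rewrite /m1 preimage_bigcup.
apply: measure_semi_sigma_additive.
- by move=> n; rewrite -[X in measurable X]setTI; exact: mf.
- apply/trivIsetP => /= i j _ _ ij; rewrite -preimage_setI.
  by move/trivIsetP : tF => /(_ _ _ _ _ ij) ->//; rewrite preimage_set0.
- by rewrite -preimage_bigcup -[X in measurable X]setTI; exact: mf.
Qed.

HB.instance Definition _ := isMeasure.Build _ _ _ m1 m1_0 m1_ge0 m1_sa.

Lemma rhoK_ge0 x : 0 <= rhoK x.
Proof. by apply: divr_ge0; apply: ltW; apply: wpath_gt0. Qed.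

Lemma rhoK_meas : measurable_fun setT (fun x : OmegaC => (rhoK x)%:E).
Proof. exact: (@prefix_fun_meas _ (\bar R) K (fun p => (wpath q (F p) / wpath q p)%:E)). Qed.

Definition m2 (E : set OmegaC) : \bar R := (\int[P]_(x in E) (rhoK x)%:E)%E.

Let m2_0 : m2 set0 = 0%E.
Proof. exact: integral_set0. Qed.

Let m2_ge0 A : (0 <= m2 A)%E.
Proof. by apply: integral_ge0 => x _; rewrite lee_fin rhoK_ge0. Qed.

Let m2_sa : semi_sigma_additive m2.
Proof.
apply: semi_sigma_additive_nng_induced; first exact: rhoK_meas.
by move=> x; rewrite lee_fin rhoK_ge0.
Qed.

HB.instance Definition _ := isMeasure.Build _ _ _ m2 m2_0 m2_ge0 m2_sa.

Lemma cyl_invalid b : ~~ valid b -> cyl b = set0.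
Proof.
move=> nvb; apply/seteqP; split => // x /= h; move: nvb.
by rewrite -h prefix_valid.
Qed.

Definition GK : set (set OmegaC) :=
  [set C | C = set0 \/ exists b, [/\ valid b, (K <= size b)%N & C = cyl b]].

Lemma GK_setI : setI_closed GK.
Proof.
move=> A B [->|[b [vb Kb ->]]] [->|[c [vc Kc ->]]]; try by left; rewrite ?set0I ?setI0.
wlog hbc : b c vb vc Kb Kc / (size b <= size c)%N.
  move=> W; case: (leqP (size b) (size c)) => h; first exact: W.
  rewrite setIC; apply: W => //; exact: ltnW.
rewrite cylI //; case: ifP => _; [right; exists c | left] => //.
Qed.

Lemma cyl_take a M : (size a <= M)%N ->
  cyl a = [set x : Omega | take (size a) (prefix x M) = a].
Proof. by move=> h; apply/seteqP; split => x; rewrite /cyl /= take_prefix. Qed.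

Lemma GK_gen : (measurable : set (set OmegaC)) = <<s GK >>.
Proof.
apply/seteqP; split.
- apply: smallest_sub; first exact: smallest_sigma_algebra.
  move=> _ [M [l [a [sl [fa ->]]]]].
  rewrite (cyl_take (leq_maxl (size a) K)) (cylset_eq _ (fun p => take (size a) p = a)).
  have [_ _ hU] := smallest_sigma_algebra setT GK.
  apply: hU => n; apply: sub_sigma_algebra; rewrite /Dn.
  case: unpickle => [b|]; last by left.
  case: ifP => [/andP [_ /eqP sb]|_]; last by left.
  have [vb|nvb] := boolP (valid b); last by left; exact: cyl_invalid.
  by right; exists b; split => //; rewrite sb leq_maxr.
- apply: smallest_sub; first exact: sigma_algebra_measurable.
  move=> _ [->|[b [vb _ ->]]]; [exact: measurable0 | exact: cyl_meas].
Qed.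

Definition coverK (k : nat) : set OmegaC :=
  if unpickle k is Some b then (if valid b && (size b == K) then cyl b else set0)
  else set0.

Lemma coverK_GK k : GK (coverK k).
Proof.
rewrite /coverK; case: unpickle => [b|]; last by left.
by case: ifP => [/andP [vb /eqP sb]|_]; [right; exists b; rewrite sb | left].
Qed.

Lemma coverK_cover : \bigcup_k coverK k = setT.
Proof.
apply/seteqP; split => // x _; exists (pickle (prefix x K)) => //.
by rewrite /coverK pickleK prefix_valid size_prefix eqxx /cyl /= size_prefix.
Qed.

Lemma m1_fin k : (m1 (coverK k) < +oo)%E.
Proof.
have mc : measurable (coverK k).
  by case: (coverK_GK k) => [->|[b [_ _ ->]]]; [exact: measurable0|exact: cyl_meas].
have := mapK_meas hG measurableT mc; rewrite setTI => mp.
by rewrite /m1; apply: (le_lt_trans (probability_le1 P mp)); exact: ltey.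
Qed.

Lemma m1m2_GK A : GK A -> m1 A = m2 A.
Proof.
case=> [->|[b [vb Kb ->]]]; first by rewrite /m1 /m2 preimage_set0 measure0 integral_set0.
set t := take K b; set r := drop K b.
have vt : valid t := valid_take K vb.
have st : size t = K by rewrite /t size_takel.
have [vFt sFt lFt] := hF vt st.
set b' := F t ++ r.
have vb' : valid b'.
  rewrite /valid cat_path; apply/andP; split => //; rewrite lFt; exact: valid_drop_path.
have sb' : size b' = size b by rewrite size_cat sFt size_drop; lia.
have lb' : last [::] b' = last [::] b.
  by rewrite last_cat lFt /t /r -last_cat cat_take_drop.
have pre : mapK K G @^-1` cyl b = cyl b'.
  apply/seteqP; split => x; rewrite /cyl /= prefix_mapK // ?sb';
    set p := prefix x (size b);
    have pK : prefix x K = take K p by rewrite take_prefix.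
  - move=> h.
    have [_ sG _] := hG (prefix_valid x K) (size_prefix x K).
    rewrite take_oversize in h; last by rewrite sG.
    rewrite -(cat_take_drop K p).
    have hd : drop K p = r by rewrite /r -h drop_size_cat.
    have ht : G (take K p) = t by rewrite /t -h take_size_cat // -pK.
    rewrite /b' -ht hFG ?hd //.
      by rewrite -pK prefix_valid.
    by rewrite -pK size_prefix.
  - move=> h; rewrite pK h /b' take_size_cat // hGF // take_oversize; last by rewrite st.
    by rewrite drop_size_cat // cat_take_drop.
rewrite /m1 pre /m2.
rewrite (eq_integral (cst (wpath q (F t) / wpath q t)%:E)); last first.
  move=> x; rewrite inE /cyl /= => hx.
  by rewrite /rhoK -(take_prefix x Kb) hx.
rewrite integral_cst; last exact: cyl_meas.
rewrite -(fineK (fin_num_measure P _ (cyl_meas b'))).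
rewrite -[X in _ = (_ * X)%E](fineK (fin_num_measure P _ (cyl_meas b))).
rewrite (Pcyl_ratio hq0 hP vb vb' (esym sb') (esym lb')) -EFinM; congr EFin.
congr (_ * _).
rewrite /b' !wpathE wfrom_cat -[in wfrom q [::] b](cat_take_drop K b) wfrom_cat.
rewrite -!wpathE lFt -/t -/r.
have n1 := wpath_neq0 hq0 t; have n2 : wfrom q (last [::] t) r != 0.
  by rewrite gt_eqF // wfrom_gt0.
by field; rewrite n1 n2.
Qed.

Theorem GL (E : set OmegaC) : measurable E -> P (mapK K F @` E) = (\int[P]_(x in E) (rhoK x)%:E)%E.
Proof.
move=> mE.
have idGF : forall b, valid b -> size b = K -> (G \o F) b = b by move=> b vb sb; exact: hGF.
have idFG : forall b, valid b -> size b = K -> (F \o G) b = b by move=> b vb sb; exact: hFG.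
have -> : mapK K F @` E = mapK K G @^-1` E.
  apply/seteqP; split => x /=.
  - by case=> y Ey <-; rewrite mapK_comp // mapK_id.
  - by move=> h; exists (mapK K G x) => //; rewrite mapK_comp // mapK_id.
change (m1 E = m2 E).
apply: (measure_unique GK coverK GK_gen GK_setI coverK_GK coverK_cover) => //.
- exact: m1m2_GK.
- exact: m1_fin.
Qed.

End GL.

Lemma mapK_char M F (h : Omega -> Omega) : presv M F ->
  (forall w, prefix (h w) M = F (prefix w M) /\
     forall i, (M < i)%N -> vert (h w) i = vert w i) -> h = mapK M F.
Proof.
move=> hF H; apply: funext => w; apply: Omega_ext => i.
have [h1 h2] := H w.
rewrite vert_mapK // /sfun; case: leqP => hi; last exact: h2.
case: i hi => [|i] hi; first by rewrite !vert0.
by rewrite -(nth_prefix _ [::] hi) h1.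
Qed.

Lemma valid_K b K : valid b -> size b = K ->
  paths_to K (last [::] b) b /\ is_sign K (last [::] b).
Proof. by move=> vb <-; split; [exact: valid_paths_to|exact: valid_sign]. Qed.

Section Family.
Variables (K : nat) (S : seq int -> seq (seq int) -> seq (seq int)).
Hypothesis hS : forall l, is_sign K l -> set_bij (paths_to K l) (paths_to K l) (S l).

Definition famF b := S (last [::] b) b.
Definition famG b :=
  match pselect (exists a, paths_to K (last [::] b) a /\ S (last [::] b) a = b) with
  | left H => proj1_sig (cid H)
  | right _ => b
  end.

Lemma famG_spec b : valid b -> size b = K ->
  paths_to K (last [::] b) (famG b) /\ S (last [::] b) (famG b) = b.
Proof.
move=> vb sb; have [pb sl] := valid_K vb sb.
have [_ _ su] := hS sl.
rewrite /famG; case: pselect => [H|nH]; first by case: (cid H).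
exfalso; apply: nH; have [a pa e] := su _ pb; by exists a.
Qed.

Lemma famF_presv : presv K famF.
Proof.
move=> b vb sb; have [pb sl] := valid_K vb sb.
have [hf _ _] := hS sl.
by have [? ? ?] := paths_toP (hf _ pb).
Qed.

Lemma famG_presv : presv K famG.
Proof.
move=> b vb sb; have [pa _] := famG_spec vb sb.
by have [? ? ?] := paths_toP pa.
Qed.

Lemma famGF b : valid b -> size b = K -> famG (famF b) = b.
Proof.
move=> vb sb; have [pb sl] := valid_K vb sb.
have [hf hi _] := hS sl.
have [vF sF lF] := famF_presv vb sb.
have [pa e] := famG_spec vF sF.
rewrite lF in pa e; apply: hi; rewrite ?inE //; exact: mem_set.
Qed.

Lemma famFG b : valid b -> size b = K -> famF (famG b) = b.
Proof.
move=> vb sb; have [pa e] := famG_spec vb sb.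
have [? ? la] := paths_toP pa.
by rewrite /famF la.
Qed.

End Family.

Definition goodK K F G := [/\ presv K F, presv K G,
  (forall b, valid b -> size b = K -> G (F b) = b) &
  (forall b, valid b -> size b = K -> F (G b) = b)].

Lemma id_bij (T : Type) (A : set T) : set_bij A A id.
Proof. by split => // a Aa; exists a. Qed.

Lemma SN_local M h : SN M h -> exists F G, goodK M F G /\ h = mapK M F.
Proof.
elim => {h}.
- exists id, id; split; first by split => // b vb sb.
  by apply: funext => w; rewrite mapK_id.
- move=> g [l [s [sl [sb [act fx]]]]].
  pose S l' := if l' == l then s else id.
  have hS : forall l', is_sign M l' -> set_bij (paths_to M l') (paths_to M l') (S l').
    by move=> l' _; rewrite /S; case: eqP => [->|_]; [exact: sb|exact: id_bij].
  exists (famF S), (famG M S); split.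
    split; [exact: famF_presv hS|exact: famG_presv hS|exact: famGF hS|exact: famFG hS].
  apply: mapK_char; first exact: famF_presv hS.
  move=> w; rewrite /famF /S last_prefix.
  case: eqP => [e|ne]; first exact: act.
  by rewrite fx.
- move=> g h _ [F1 [G1 [[p1 q1 a1 b1] ->]]] _ [F2 [G2 [[p2 q2 a2 b2] ->]]].
  exists (F1 \o F2), (G2 \o G1); split.
    split; try exact: presv_comp.
    + move=> b vb sb /=; have [v s _] := p2 _ vb sb; by rewrite a1 // a2.
    + move=> b vb sb /=; have [v s _] := q1 _ vb sb; by rewrite b2 // b1.
  by apply: funext => w /=; rewrite mapK_comp.
- move=> g h _ [F [G [[pF pG aGF aFG] ->]]] hgh hhg.
  exists G, F; split; first by split.
  apply: funext => w.
  have e : mapK M F (mapK M G w) = w by rewrite mapK_comp // mapK_id.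
  by rewrite -{1}e hhg.
Qed.

Lemma part1 (R : realType) (q : R) (hq0 : 0 < q) (P : probability OmegaC R)
  (hP : q_central q P) (N : nat) (g : Omega -> Omega)
  (gl : seq int -> seq (seq int) -> seq (seq int))
  (H : forall l, is_sign N l ->
        set_bij (paths_to N l) (paths_to N l) (gl l) /\ acts_on_level N l (gl l) g) :
     is_RN_deriv P g
       (fun w => \sum_(l \in [set l | is_sign N l])
                   \sum_(a \in paths_to N l)
                     (wpath q (gl l a) / wpath q a) * \1_(cyl a) w).
Proof.
have hS : forall l, is_sign N l -> set_bij (paths_to N l) (paths_to N l) (gl l).
  by move=> l sl; exact: (H l sl).1.
have eg : g = mapK N (famF gl).
  apply: mapK_char; first exact: famF_presv hS.
  move=> w; have [_ sl] := valid_K (prefix_valid w N) (size_prefix w N).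
  rewrite last_prefix in sl.
  by have := (H _ sl).2 w erefl; rewrite /famF last_prefix.
have ef : (fun w => \sum_(l \in [set l | is_sign N l])
                   \sum_(a \in paths_to N l)
                     (wpath q (gl l a) / wpath q a) * \1_(cyl a) w)
          = rhoK q N (famF gl).
  apply: funext => w.
  set l0 := vert w N; set a0 := prefix w N.
  have pa0 : paths_to N l0 a0.
    by have := valid_paths_to (prefix_valid w N); rewrite size_prefix last_prefix.
  have inner : forall l, \sum_(a \in paths_to N l) (wpath q (gl l a) / wpath q a) * \1_(cyl a) w
     = if l == l0 then wpath q (gl l0 a0) / wpath q a0 else 0.
    move=> l; case: eqP => [->|nl].
    - rewrite -(fsbig_widen [set a0]) ?fsbig_set1.
      + by rewrite indicE mem_set ?mulr1 // /cyl /= size_prefix.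
      + by move=> _ ->.
      + move=> a [pa na]; rewrite /= indicE memNset ?mulr0 // => ca; apply: na.
        have [_ sa _] := paths_toP pa; by rewrite /= -ca /cyl sa.
    - rewrite -(fsbig_widen set0) ?fsbig_set0 //.
      move=> a [pa _]; rewrite /= indicE memNset ?mulr0 // => ca; apply: nl.
      have [_ sa la] := paths_toP pa; move: ca; rewrite /cyl /= sa => ca.
      by rewrite -la -ca last_prefix.
  rewrite (eq_fsbigr (fun l => if l == l0 then wpath q (gl l0 a0) / wpath q a0 else 0)); last first.
    by move=> l _; exact: inner.
  rewrite -(fsbig_widen [set l0]) ?fsbig_set1 ?eqxx.
  + by rewrite /rhoK /famF -/a0 /a0 last_prefix.
  + move=> _ ->; have [_ sl] := valid_K (prefix_valid w N) (size_prefix w N).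
    by rewrite last_prefix in sl.
  + by move=> l [_ /eqP nl]; rewrite /= ifN.
rewrite ef; split; [|split].
- exact: (@prefix_fun_meas _ R N (fun p => wpath q (famF gl p) / wpath q p)).
- by move=> w; apply: rhoK_ge0.
- move=> E mE; rewrite eg.
  exact: (GL hq0 hP (famF_presv hS) (famG_presv hS) (famGF hS) (famFG hS) mE).
Qed.

Section Gap.
Variables (R : realType) (q : R).
Hypotheses (hq0 : 0 < q) (hq1 : q < 1).

Lemma qmono (m n : int) : m <= n -> q ^ (2 * n) <= q ^ (2 * m).
Proof.
move=> mn; have -> : n = m + (`|n - m|%N)%:Z.
  rewrite gez0_abs ?subr_ge0 //; lia.
rewrite mulrDr expfzDr ?gt_eqF // ler_piMr //; first by rewrite exprz_ge0 // ltW.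
rewrite -PoszM; apply: exprn_ile1; exact: ltW.
Qed.

Lemma small_pow (r : R) : 0 < r -> exists k : nat, q ^+ (2 * k) < r.
Proof.
move=> r0.
have hz : `|q ^+ 2| < 1 by rewrite ger0_norm ?exprn_ge0 ?ltW // expr_lt1 ?ltW.
have := @cvgr_lt R nat \oo _ _ 0 (cvg_expr hz) r r0.
move=> [N _ HN]; exists N; rewrite exprM; exact: (HN N (leqnn N)).
Qed.

Lemma gap (r : R) : 0 < r -> (forall n : int, r != q ^ (2 * n)) ->
  exists2 eps, 0 < eps & forall n : int, eps < `|q ^ (2 * n) - r|.
Proof.
move=> r0 hn.
have [k hk] := small_pow r0.
have [j hj] : exists j : nat, q ^+ (2 * j) < r^-1 by apply: small_pow; rewrite invr_gt0.
pose Pd (m : nat) := q ^ (2 * (m%:Z - j%:Z)) < r.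
have exP : exists m, Pd m.
  exists (j + k)%N; rewrite /Pd PoszD addrAC subrr add0r -PoszM; exact: hk.
case: (ex_minnP exP) => m Pm minm.
have Pd0 : ~~ Pd 0.
  rewrite /Pd -leNgt sub0r mulrN -invr_expz -PoszM.
  rewrite -[r]invrK lef_pV2.
  - exact: (ltW hj).
  - by rewrite posrE invr_gt0.
  - by rewrite posrE exprz_gt0.
case: m Pm minm => [|m'] Pm minm; first by rewrite Pm in Pd0.
have nPm' : ~~ Pd m' by apply/negP => h; have := minm _ h; rewrite ltnn.
pose n0 : int := m'%:Z - j%:Z.
have h1 : q ^ (2 * (n0 + 1)) < r.
  have e : ((m'.+1)%:Z - j%:Z) = (m'%:Z - j%:Z + 1) by lia.
  by move: Pm; rewrite /Pd e.
have h2 : r < q ^ (2 * n0).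
  by rewrite lt_neqAle hn leNgt; exact: nPm'.
pose d := Num.min (q ^ (2 * n0) - r) (r - q ^ (2 * (n0 + 1))).
have d0 : 0 < d by rewrite lt_min !subr_gt0 h1 h2.
exists (d / 2); first by rewrite divr_gt0.
move=> n; have dlt : d / 2 < d by rewrite ltr_pdivrMr // ltr_pMr // ltr1n.
apply: (lt_le_trans dlt); case: (leP n n0) => hn0.
- have := qmono hn0 => h; rewrite ger0_norm; last by rewrite subr_ge0 (le_trans (ltW h2)).
  by rewrite /d ge_min lerD2r h.
- have hn1 : n0 + 1 <= n by lia.
  have := qmono hn1 => h; rewrite ler0_norm; last by rewrite subr_le0 (le_trans h) // ltW.
  by rewrite opprB /d ge_min lerD2l lerN2 h orbT.
Qed.
End Gap.

Definition swapF (a b c : seq (seq int)) := if c == a then b else if c == b then a else c.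

Lemma swapF_inv a b c : swapF a b (swapF a b c) = c.
Proof.
rewrite /swapF; have [->|na] := eqVneq c a.
- rewrite eqxx; have [->|nba] := eqVneq b a; first by rewrite ?eqxx.
  by rewrite ?eqxx.
- have [->|nb] := eqVneq c b.
  + by rewrite ?(negbTE na) ?eqxx /= ?(negbTE na) ?eqxx.
  + by rewrite ?(negbTE na) ?(negbTE nb) /= ?(negbTE na) ?(negbTE nb).
Qed.

Lemma swapF_presv a b : valid a -> valid b -> size a = size b ->
  last [::] a = last [::] b -> presv (size a) (swapF a b).
Proof.
move=> va vb sab lab c vc sc; rewrite /swapF.
case: eqP => [->|_]; first by split.
by case: eqP => [->|_]; split.
Qed.

Lemma eqset_meas (g1 g2 : OmegaC -> OmegaC) : measurable_fun setT g1 ->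
  measurable_fun setT g2 -> measurable [set x : OmegaC | g1 x = g2 x].
Proof.
move=> m1 m2.
pose D M n : set OmegaC := if unpickle n is Some c then
  (if size c == M then g1 @^-1` cyl c `&` g2 @^-1` cyl c else set0) else set0.
have -> : [set x : OmegaC | g1 x = g2 x] = \bigcap_M \bigcup_n D M n.
  apply/seteqP; split => x /=.
  - move=> e M _; exists (pickle (prefix (g1 x) M)) => //.
    by rewrite /D pickleK size_prefix eqxx /cyl /= size_prefix e.
  - move=> h; apply: Omega_ext => i; rewrite -!last_prefix.
    have [n _] := h i I; rewrite /D; case: unpickle => // c.
    case: ifP => // /eqP sc [].
    by rewrite /cyl /= sc => -> ->.
apply: bigcapT_measurable => M; apply: bigcupT_measurable => n; rewrite /D.
case: unpickle => [c|]; last exact: measurable0.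
case: ifP => _; last exact: measurable0.
apply: measurableI.
- by have := m1 measurableT _ (cyl_meas c); rewrite setTI.
- by have := m2 measurableT _ (cyl_meas c); rewrite setTI.
Qed.

Lemma part2 (R : realType) (q : R) (hq0 : 0 < q) (hq1 : q < 1)
  (P : probability OmegaC R) (hP : q_central q P) :
  ratio_set P `<=` [set r | r = 0 \/ exists n : int, r = q ^ (2 * n)].
Proof.
move=> r [r0 hr] /=.
have [->|rn0] := eqVneq r 0; first by left.
have rpos : 0 < r by rewrite lt_def rn0 r0.
right; apply: contrapT => hn.
have hn' : forall n : int, r != q ^ (2 * n).
  by move=> n; apply/eqP => e; apply: hn; exists n.
have [eps eps0 heps] := gap hq0 hq1 rpos hn'.
pose e := Num.min eps (r / 2).
have e0 : 0 < e by rewrite lt_min eps0 divr_gt0.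
have er : e < r.
  by rewrite /e gt_min; apply/orP; right; rewrite ltr_pdivrMr // ltr_pMr // ltr1n.
have eeps : e <= eps by rewrite ge_min lexx.
have PT : (0 < P setT)%E by rewrite probability_setT lte_fin ltr01.
have [B [g [f [mB [PB [_ [[mg hgS] [_ [[mf [f0 hint]] hae]]]]]]]]] :=
  hr e e0 setT measurableT PT.
pose okp (p : seq (seq int) * seq (seq int)) := valid p.1 && valid p.2 &&
  (size p.1 == size p.2) && (last [::] p.1 == last [::] p.2).
pose Ep (p : seq (seq int) * seq (seq int)) : set OmegaC := if okp p then
  B `&` cyl p.1 `&` [set x | g x = mapK (size p.1) (swapF p.1 p.2) x] else set0.
pose En n := if unpickle n is Some p then Ep p else set0.
have mEp p : measurable (Ep p).
  rewrite /Ep; case: ifP => [/andP[/andP[/andP[va vb] /eqP s] /eqP l]|_];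
    last exact: measurable0.
  apply: measurableI; first by apply: measurableI => //; exact: cyl_meas.
  by apply: eqset_meas => //; exact: mapK_meas (swapF_presv va vb s l).
have mEn n : measurable (En n).
  by rewrite /En; case: unpickle => [p|]; [exact: mEp|exact: measurable0].
have cover : B `<=` \bigcup_n En n.
  move=> x Bx; have [h [[M hSN] ghx]] := hgS x.
  have [F [G [[pF _ _ _] eh]]] := SN_local hSN.
  have [vb sb lb] := pF _ (prefix_valid x M) (size_prefix x M).
  exists (pickle (prefix x M, F (prefix x M))) => //.
  rewrite /En pickleK /Ep /okp /= prefix_valid vb sb size_prefix eqxx lb eqxx /=.
  split; first by split => //; rewrite /cyl /= size_prefix.
  by rewrite /= ghx eh; apply: mapK_ext; rewrite /swapF eqxx.
have [n PEn] : exists n, (0 < P (En n))%E.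
  apply: contrapT => hno.
  have z k : P (En k) = 0%E.
    apply/eqP; rewrite eq_le measure_ge0 andbT leNgt; apply/negP => h.
    by apply: hno; exists k.
  have [Nn [mN PN sN]] : P.-negligible (\bigcup_k En k).
    by apply: negligible_bigcup => k; exists (En k); split => //; exact: z.
  have : (P B <= P Nn)%E.
    by apply: le_measure; rewrite ?inE //; exact: (subset_trans cover sN).
  by rewrite PN => /(lt_le_trans PB); rewrite ltxx.
move: PEn; rewrite /En; case: unpickle => [[a b]|]; last by rewrite measure0 ltxx.
have mE := mEp (a, b).
rewrite /Ep /okp /= in mE *.
case: ifP mE => [/andP[/andP[/andP[va vb] /eqP sab] /eqP lab]|_] mE; last by rewrite measure0 ltxx.
move=> PE.
set E := (B `&` cyl a `&` [set x | g x = mapK (size a) (swapF a b) x]) in mE PE *.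
have sp := swapF_presv va vb sab lab.
have sinv : forall c, valid c -> size c = size a -> swapF a b (swapF a b c) = c.
  by move=> c _ _; exact: swapF_inv.
have GLE := GL hq0 hP sp sp sinv sinv mE.
have img : g @` E = mapK (size a) (swapF a b) @` E.
  apply/seteqP; split => _ [x Ex <-]; exists x => //; case: Ex => _ ->.
  by [].
  by [].
have int1 := hint E mE; rewrite img GLE in int1.
pose rho := wpath q b / wpath q a.
have fin : P E = (fine (P E))%:E by rewrite fineK // fin_num_measure.
set p := fine (P E) in fin.
have p0 : 0 < p by rewrite -lte_fin -fin.
have ic c : (\int[P]_(x in E) (cst c) x = c * p%:E)%E.
  by rewrite integral_cst //; congr (_ * _)%E.
have crho : (\int[P]_(x in E) (rhoK q (size a) (swapF a b) x)%:E = rho%:E * p%:E)%E.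
  rewrite (eq_integral (cst rho%:E)); first exact: ic.
  by move=> x; rewrite inE => -[[_ cx] _]; rewrite /rhoK cx /swapF eqxx.
have mfE : measurable_fun E (fun x => (f x)%:E).
  by apply/measurable_EFinP; exact: measurable_funTS.
have up : rho <= r + e.
  have h : (\int[P]_(x in E) (f x)%:E <= \int[P]_(x in E) (cst (r + e)%:E) x)%E.
    apply: ae_ge0_le_integral => //.
    - by move=> x _; rewrite lee_fin f0.
    - by move=> x _; rewrite lee_fin addr_ge0 // ltW.
    - move: hae; apply: filterS => x h [[Bx _] _]; rewrite /= lee_fin.
      by have := h Bx; rewrite ltr_distl => /andP [_ /ltW].
  by move: h; rewrite ic -int1 crho -!EFinM lee_fin ler_pM2r.
have lo : r - e <= rho.
  have h : (\int[P]_(x in E) (cst (r - e)%:E) x <= \int[P]_(x in E) (f x)%:E)%E.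
    apply: ae_ge0_le_integral => //.
    - by move=> x _; rewrite lee_fin subr_ge0 ltW.
    - by move=> x _; rewrite lee_fin f0.
    - move: hae; apply: filterS => x h [[Bx _] _]; rewrite /= lee_fin.
      by have := h Bx; rewrite ltr_distl => /andP [/ltW].
  by move: h; rewrite ic -int1 crho -!EFinM lee_fin ler_pM2r.
have hd : `|rho - r| <= e by rewrite ler_distl lo up.
have := heps (\sum_(x <- b) absl x - \sum_(x <- a) absl x).
rewrite -(wpath_ratio hq0 va vb sab lab) -/rho => h'.
by have := lt_le_trans h' (le_trans hd eeps); rewrite ltxx.
Qed.


Unset Implicit Arguments.

Theorem lemma4p1 (R : realType) (q : R) (hq0 : 0 < q) (hq1 : q < 1)
  (P : probability OmegaC R) (hP : q_central q P)
  (N : nat) (hN : (1 <= N)%N) (g : Omega -> Omega) (hg : SN N g) :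
  (forall gl : seq int -> seq (seq int) -> seq (seq int),
     (forall l, is_sign N l ->
        set_bij (paths_to N l) (paths_to N l) (gl l) /\ acts_on_level N l (gl l) g) ->
     is_RN_deriv P g
       (fun w => \sum_(l \in [set l | is_sign N l])
                   \sum_(a \in paths_to N l)
                     (wpath q (gl l a) / wpath q a) * \1_(cyl a) w))
  /\
  ratio_set P `<=` [set r | r = 0 \/ exists n : int, r = q ^ (2 * n)].
Proof.
split.
- by move=> gl H; exact: (part1 hq0 hP H).
- exact: (part2 hq0 hq1 hP).
Qed.
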